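(* Let $f:T\to T'$ be a homomorphism of pre-trusses. (1) For all $z\in\operatorname{im}f$, $f^{-1}(z)$ is a paragon in $T$. Moreover, if $P'$ is a paragon in the pre-truss $\operatorname{im}f$, then $f^{-1}(P')$ is a paragon in $T$. (2) If $P$ is a paragon in $T$, then $f(P)$ is a paragon in $\operatorname{im}f$.
   Context: A heap is a set with a ternary operation $[-,-,-]$ satisfying $[a_1,a_2,[a_3,a_4,a_5]]=[[a_1,a_2,a_3],a_4,a_5]$ and $[a,a,b]=b=[b,a,a]$. A pre-truss is a heap with an associative binary operation; a homomorphism of pre-trusses preserves both the ternary operation and the multiplication; its image is a pre-truss. A normal sub-heap is a non-empty subset $S$ closed under $[-,-,-]$ with $[[a,e,s],a,e]\in S$ for all $a$ and $e,s\in S$; $a\sim_S b$ iff $[a,b,s]\in S$ for some (equivalently all) $s\in S$. A sub-heap $S$ is closed if $[ts',ts,s]\in S$ and $[s't,st,s]\in S$ for all $s,s'\in S$ and $t$ in the pre-truss. A paragon is a non-empty normal sub-heap $P$ such that every equivalence class of $\sim_P$ is a closed sub-heap. *)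

(* Defs.v *)
From Stdlib Require Import ProofIrrelevance.
Set Implicit Arguments.

Record pretruss := PreTruss {
  car :> Type;
  tern : car -> car -> car -> car;
  mul : car -> car -> car;
  tern_assoc : forall a1 a2 a3 a4 a5,
      tern a1 a2 (tern a3 a4 a5) = tern (tern a1 a2 a3) a4 a5;
  tern_malcev_l : forall a b, tern a a b = b;
  tern_malcev_r : forall a b, tern b a a = b;
  mul_assoc : forall a b c, mul a (mul b c) = mul (mul a b) c
}.
Arguments tern {p}.
Arguments mul {p}.

Definition is_hom {T T' : pretruss} (f : T -> T') : Prop :=
  (forall a b c, f (tern a b c) = tern (f a) (f b) (f c)) /\
  (forall a b, f (mul a b) = mul (f a) (f b)).

Definition subset (T : pretruss) := T -> Prop.

Definition sub_heap {T : pretruss} (S : subset T) : Prop :=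
  (exists s, S s) /\ (forall a b c, S a -> S b -> S c -> S (tern a b c)).

Definition normal_sub_heap {T : pretruss} (S : subset T) : Prop :=
  sub_heap S /\
  (forall a e s, S e -> S s -> S (tern (tern a e s) a e)).

Definition sim {T : pretruss} (S : subset T) (a b : T) : Prop :=
  exists s, S s /\ S (tern a b s).

Definition sim_class {T : pretruss} (S : subset T) (a : T) : subset T :=
  fun b => sim S a b.

Definition closed_sub_heap {T : pretruss} (S : subset T) : Prop :=
  sub_heap S /\
  (forall s s' t, S s -> S s' ->
      S (tern (mul t s') (mul t s) s) /\ S (tern (mul s' t) (mul s t) s)).

Definition paragon {T : pretruss} (P : subset T) : Prop :=
  (exists p, P p) /\ normal_sub_heap P /\
  (forall a, closed_sub_heap (sim_class P a)).

Section Image.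
Variables (T T' : pretruss) (f : T -> T') (hf : is_hom f).

Definition im_car := { y : T' | exists x, f x = y }.

Definition im_of (x : T) : im_car := exist _ (f x) (ex_intro _ x eq_refl).

Lemma im_tern_ok (a b c : im_car) :
  exists x, f x = tern (proj1_sig a) (proj1_sig b) (proj1_sig c).
Proof.
destruct a as [a [xa <-]], b as [b [xb <-]], c as [c [xc <-]]; simpl.
exists (tern xa xb xc). apply (proj1 hf).
Qed.

Lemma im_mul_ok (a b : im_car) :
  exists x, f x = mul (proj1_sig a) (proj1_sig b).
Proof.
destruct a as [a [xa <-]], b as [b [xb <-]]; simpl.
exists (mul xa xb). apply (proj2 hf).
Qed.

Definition im_tern (a b c : im_car) : im_car :=
  exist _ _ (im_tern_ok a b c).
Definition im_mul (a b : im_car) : im_car :=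
  exist _ _ (im_mul_ok a b).


Lemma im_eq (a b : im_car) : proj1_sig a = proj1_sig b -> a = b.
Proof.
destruct a, b; simpl; intros ->. f_equal. apply proof_irrelevance.
Qed.

Definition im_truss : pretruss.
Proof.
refine (@PreTruss im_car im_tern im_mul _ _ _ _);
  intros; apply im_eq; simpl.
- apply tern_assoc.
- apply tern_malcev_l.
- apply tern_malcev_r.
- apply mul_assoc.
Defined.
End Image.
Arguments im_of {T T'} f x.
Arguments im_truss {T T' f} hf.

(* Main.v *)
Require Import Defs.
From Stdlib Require Import Setoid.
Set Implicit Arguments.

Section H.
Variable T : pretruss.

Lemma tern_swap (a b c d e : T) : tern a (tern b c d) e = tern (tern a d c) b e.
Proof.
assert (E : tern (tern a d c) b (tern b c d) = a).
{ rewrite tern_assoc, tern_malcev_r, <- tern_assoc, tern_malcev_l, tern_malcev_r.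
  reflexivity. }
rewrite <- E at 1. rewrite <- tern_assoc, tern_malcev_l. reflexivity.
Qed.

Lemma tern_cancel (x y z : T) : tern x y z = z -> x = y.
Proof.
intro H.
assert (E1 : tern (tern x y z) z y = y) by (rewrite H; apply tern_malcev_l).
rewrite <- tern_assoc, tern_malcev_l, tern_malcev_r in E1. exact E1.
Qed.

Lemma sim_any (S : subset T) (x y q r : T) : sub_heap S -> S q -> S (tern x y q) -> S r ->
  S (tern x y r).
Proof.
intros [_ Hs] Hq H Hr.
replace (tern x y r) with (tern (tern x y q) q r).
- apply Hs; auto.
- rewrite <- tern_assoc, tern_malcev_l. reflexivity.
Qed.

Lemma singleton_paragon (z : T) : paragon (fun u => u = z).
Proof.
split; [exists z; reflexivity|]. split; [split|].
- split; [exists z; reflexivity|]. intros a b c -> -> ->. apply tern_malcev_l.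
- intros a e s -> ->. rewrite tern_malcev_r, tern_malcev_l. reflexivity.
- intro a. split; [split|].
  + exists a. exists z. split; [reflexivity|]. apply tern_malcev_l.
  + intros b c d [s1 [-> H1]] [s2 [-> H2]] [s3 [-> H3]].
    apply tern_cancel in H1; apply tern_cancel in H2; apply tern_cancel in H3. subst.
    exists z. split; [reflexivity|]. rewrite tern_malcev_l. apply tern_malcev_l.
  + intros s s' t [s1 [-> H1]] [s2 [-> H2]].
    apply tern_cancel in H1; apply tern_cancel in H2. subst.
    split; exists z; (split; [reflexivity|]); rewrite !tern_malcev_l; reflexivity.
Qed.
End H.

Lemma sh_ext (T : pretruss) (S S' : subset T) : (forall y, S y <-> S' y) ->
  closed_sub_heap S -> closed_sub_heap S'.
Proof.
intros E [[[s Hs] Ht] Hc]. split; [split|].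
- exists s. apply E, Hs.
- intros a b c Ha Hb Hc'. apply E, Ht; apply E; assumption.
- intros s1 s2 t H1 H2. destruct (Hc s1 s2 t) as [A B]; try apply E; auto.
  split; apply E; assumption.
Qed.

Lemma preimage_paragon (T U : pretruss) (g : T -> U) (hg : is_hom g) (Q : subset U) :
  paragon Q -> (exists x, Q (g x)) -> paragon (fun x => Q (g x)).
Proof.
destruct hg as [hg1 hg2].
intros [_ [[HQsh HQn] HQc]] [p0 Hp0].
assert (Hsim : forall a b, sim (fun x => Q (g x)) a b <-> sim Q (g a) (g b)).
{ intros a b. split.
  - intros [s [Hs H]]. exists (g s). rewrite hg1 in H. auto.
  - intros [q [Hq H]]. exists p0. split; auto. rewrite hg1.
    apply sim_any with q; auto. }
split; [exists p0; auto|]. split; [split|].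
- split; [exists p0; auto|]. intros a b c Ha Hb Hc. rewrite hg1. apply HQsh; auto.
- intros a e s He Hs. rewrite !hg1. apply HQn; auto.
- intro a. destruct (HQc (g a)) as [[_ Hsh] Hcl]. split; [split|].
  + exists a. exists p0. split; auto. rewrite tern_malcev_l. auto.
  + intros b c d Hb Hc Hd. unfold sim_class in *. apply Hsim in Hb, Hc, Hd.
    apply Hsim. rewrite hg1. apply Hsh; auto.
  + intros s s' t Hs Hs'. unfold sim_class in *. apply Hsim in Hs, Hs'.
    destruct (Hcl (g s) (g s') (g t) Hs Hs') as [A B].
    split; apply Hsim; rewrite hg1, !hg2; auto.
Qed.

Section Img.
Variables (T T' : pretruss) (f : T -> T') (hf : is_hom f).

Definition imS (S : subset T) : subset (im_truss hf) :=
  fun y => exists x, S x /\ f x = proj1_sig y.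

Lemma imS_sh (S : subset T) : sub_heap S -> sub_heap (imS S).
Proof.
intros [[s Hs] Ht]. split.
- exists (im_of f s). exists s. auto.
- intros a b c [x1 [H1 E1]] [x2 [H2 E2]] [x3 [H3 E3]].
  exists (tern x1 x2 x3). split; auto. rewrite (proj1 hf), E1, E2, E3. reflexivity.
Qed.

Lemma imS_closed (S : subset T) : closed_sub_heap S -> closed_sub_heap (imS S).
Proof.
intros [Hsh Hc]. split; [apply imS_sh; auto|].
intros a b t [x1 [H1 E1]] [x2 [H2 E2]]. destruct t as [t [xt <-]].
destruct (Hc x1 x2 xt H1 H2) as [A B]. split.
- exists (tern (mul xt x2) (mul xt x1) x1). split; auto.
  simpl. rewrite (proj1 hf), !(proj2 hf), E1, E2. reflexivity.
- exists (tern (mul x2 xt) (mul x1 xt) x1). split; auto.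
  simpl. rewrite (proj1 hf), !(proj2 hf), E1, E2. reflexivity.
Qed.
End Img.

Theorem lemma3p13 (T T' : pretruss) (f : T -> T') (hf : is_hom f) :
  (* (1) fibres of points of the image are paragons *)
  (forall z : T', (exists x, f x = z) -> paragon (fun x : T => f x = z)) /\
  (* (1) preimages of paragons of im f are paragons *)
  (forall P' : subset (im_truss hf),
      paragon P' -> paragon (fun x : T => P' (im_of f x))) /\
  (* (2) images of paragons are paragons in im f *)
  (forall P : subset T,
      paragon P ->
      paragon (fun y : im_truss hf => exists x, P x /\ f x = proj1_sig y)).
Proof.
split; [|split].
- intros z Hz. exact (preimage_paragon hf (@singleton_paragon T' z) Hz).
- intros P' HP'.
  assert (hi : is_hom (T' := im_truss hf) (im_of f)).
  { split; intros; apply im_eq; simpl; [apply (proj1 hf)|apply (proj2 hf)]. }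
  apply (preimage_paragon hi HP').
  destruct HP' as [[[y [x <-]] Hy] _]. exists x. exact Hy.
- intros P [[p Hp] [[Psh Pn] Pc]].
  destruct hf as [hf1 hf2] eqn:Ehf.
  split; [exists (im_of f p); exists p; auto|]. split; [split|].
  + apply (@imS_sh T T' f hf P Psh).
  + intros a e s [xe [He Ee]] [xs [Hs Es]]. destruct a as [a [xa <-]].
    exists (tern (tern xa xe xs) xa xe). split; auto.
    simpl. rewrite !hf1, Ee, Es. reflexivity.
  + intros [a [x0 <-]]. apply (sh_ext (S := @imS T T' f hf (sim_class P x0))).
    2: apply imS_closed; auto.
    intros [y [x Ey]]. unfold imS, sim_class, sim. simpl. split.
    * intros [x'' [[s [Hs H]] Hx]]. exists (im_of f s). split.
      -- exists s; auto.
      -- exists (tern x0 x'' s). split; auto. simpl. rewrite hf1, Hx. reflexivity.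
    * intros [[q [xq Eq]] [[p1 [Hp1 E1]] [p2 [Hp2 E2]]]]. simpl in E1, E2.
      exists (tern p1 p2 x0). split.
      -- exists p1. split; auto. rewrite tern_swap, tern_malcev_l, tern_malcev_r. auto.
      -- rewrite !hf1, E2, E1, tern_swap, tern_malcev_l, tern_malcev_r. reflexivity.
Qed.
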